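(* Let $\Bbbk$ be an algebraically closed field with $\mathrm{char}(\Bbbk)\neq 2$, let $n\ge 1$, and let $\mu=(\mu_{ij})$ with $\mu_{ij}\in\Bbbk^\times$, $\mu_{ij}\mu_{ji}=1$ for all $i,j$, and $\mu_{ii}=1$. Let $S$ be the $\Bbbk$-algebra on generators $z_1,\dots,z_n$ with defining relations $z_jz_i=\mu_{ij}z_iz_j$ for all $i,j$. Let $M_1,\dots,M_n$ be linearly independent $\mu$-symmetric $n\times n$ matrices, let $q_k=\sum_{i,j}(M_k)_{ij}z_iz_j\in S_2$, and assume the quadric system associated to $\{q_1,\dots,q_n\}$ is normalizing and base-point free. Let $A=T(V)/\langle W\rangle$ be the associated graded skew Clifford algebra written as a quadratic algebra, and let $\Gamma=\{(a,b)\in\mathbb P(S_1)\times\mathbb P(S_1): w(a\otimes b)=0\text{ for all }w\in W\}$. Then for $a,b\in S_1\setminus\{0\}$, the quadratic form $ab$ lies in $\mathbb P\big(\sum_{i=1}^n\Bbbk q_i\big)$ if and only if $(a,b)\in\Gamma$.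
   Context: A matrix $M\in M(n,\Bbbk)$ is $\mu$-symmetric if $M_{ij}=\mu_{ij}M_{ji}$ for all $i,j$. Let $U\subset T(S_1)_2=S_1\otimes S_1$ be the span of the defining relations $z_j\otimes z_i-\mu_{ij}z_i\otimes z_j$ of $S$, and let $\mathcal V(U)\subset\mathbb P(S_1^* )\times\mathbb P(S_1^* )$ be its zero locus. For $q\in S_2\setminus\{0\}$, $\mathcal V_U(q)=\mathcal V(\hat q)\cap\mathcal V(U)$ where $\hat q$ is any lift of $q$ to $S_1\otimes S_1$. The quadric system associated to $q_1,\dots,q_n$ is their span; it is normalizing if it is spanned by a normalizing sequence in $S$, and base-point free if $\bigcap_k\mathcal V_U(q_k)=\emptyset$. The graded skew Clifford algebra $A=A(\mu,M_1,\dots,M_n)$ is the graded $\Bbbk$-algebra with degree-one generators $x_1,\dots,x_n$ and degree-two generators $y_1,\dots,y_n$ with relations $x_ix_j+\mu_{ij}x_jx_i=\sum_{k}(M_k)_{ij}y_k$ for all $i,j$, together with the existence of a normalizing sequence $\{y_1',\dots,y_n'\}$ spanning $\sum_k\Bbbk y_k$. Under the stated hypotheses, $A$ is a quadratic algebra generated by $x_1,\dots,x_n$: $A=T(V)/\langle W\rangle$ where $V=S_1^*$, $\{x_i\}$ is the dual basis to $\{z_i\}$, and $W\subseteq V\otimes V$ is the space of quadratic relations, spanned by elements $\sum_{i,j}\alpha_{ijm}(x_ix_j+\mu_{ij}x_jx_i)$; its Koszul dual is $T(S_1)/\langle W^\perp\rangle=S/\langle q_1,\dots,q_n\rangle$,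 where $W^\perp\subseteq S_1\otimes S_1$ is the orthogonal complement of $W$. Here $w(a\otimes b)$ denotes the natural pairing of $w\in V\otimes V$ with $a\otimes b\in S_1\otimes S_1$. *)

(* Defs.v *)
From HB Require Import structures.
From mathcomp Require Import all_boot all_order all_algebra.
From mathcomp Require Import mpoly.

Set Implicit Arguments.
Unset Strict Implicit.
Unset Printing Implicit Defensive.

Import Order.TTheory GRing.Theory.
Local Open Scope ring_scope.

Section SkewClifford.
Variables (k : fieldType) (n : nat) (mu : 'M[k]_n).

(* The skew polynomial ring S = k<z_1..z_n>/(z_j z_i - mu_ij z_i z_j).     *)
(* Its underlying vector space is modelled by {mpoly k[n]}: the monomial   *)
(* 'X_[m] stands for the ordered monomial z_1^(m 1) ... z_n^(m n), which   *)
(* form a basis of S.  The product of S is the twisted product below:      *)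
(*   z^a z^b = (prod_(i > j) mu_ji ^ (a_i b_j)) z^(a+b),                    *)
(* obtained by moving each z_j (j < i) of z^b to the left past z_i of z^a  *)
(* using z_i z_j = mu_ji z_j z_i.                                          *)

Definition skew_twist (m1 m2 : 'X_{1..n}) : k :=
  \prod_(i < n) \prod_(j < n | (j < i)%N) (mu j i) ^+ (m1 i * m2 j).

Definition smul (p q : {mpoly k[n]}) : {mpoly k[n]} :=
  \sum_(m1 <- msupp p) \sum_(m2 <- msupp q)
     (p@_m1 * q@_m2 * skew_twist m1 m2) *: 'X_[(m1 + m2)%MM].

Definition zgen (i : 'I_n) : {mpoly k[n]} := 'X_i.

Definition lin1 (a : 'rV[k]_n) : {mpoly k[n]} := \sum_(i < n) a 0 i *: zgen i.

Definition quadric (M : 'M[k]_n) : {mpoly k[n]} :=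
  \sum_(i < n) \sum_(j < n) M i j *: smul (zgen i) (zgen j).

Definition in_span (g : 'I_n -> {mpoly k[n]}) (f : {mpoly k[n]}) : Prop :=
  exists c : 'I_n -> k, f = \sum_(l < n) c l *: g l.

Definition in_ideal_prefix (y : 'I_n -> {mpoly k[n]}) (m : nat)
    (f : {mpoly k[n]}) : Prop :=
  exists (r : nat) (a b : 'I_r -> {mpoly k[n]}) (idx : 'I_r -> 'I_n),
    (forall t, (idx t < m)%N) /\
    f = \sum_(t < r) smul (smul (a t) (y (idx t))) (b t).

Definition normal_mod (I : {mpoly k[n]} -> Prop) (x : {mpoly k[n]}) : Prop :=
  (forall s, exists t, I (smul x s - smul t x)) /\
  (forall s, exists t, I (smul s x - smul x t)).

Definition normalizing_seq (y : 'I_n -> {mpoly k[n]}) : Prop :=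
  forall m : 'I_n, normal_mod (in_ideal_prefix y m) (y m).

Definition normalizing_system (q : 'I_n -> {mpoly k[n]}) : Prop :=
  exists y : 'I_n -> {mpoly k[n]},
    normalizing_seq y /\
    (forall m, in_span q (y m)) /\ (forall l, in_span y (q l)).

(* Base-point freeness.  A point of P(S_1^* ) x P(S_1^* ) is a pair (p,r)  *)
(* of nonzero coordinate vectors (p_i = p(z_i)).  An element T of          *)
(* S_1 (x) S_1, T = sum T_ij z_i (x) z_j, vanishes at (p,r) iff            *)
(* sum T_ij p_i r_j = 0.                                                   *)

Definition tensor_eval (T : 'M[k]_n) (p r : 'rV[k]_n) : k :=
  \sum_(i < n) \sum_(j < n) T i j * p 0 i * r 0 j.

(* (p,r) lies in V(U), U spanned by z_j (x) z_i - mu_ij z_i (x) z_j *)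
Definition in_VU (p r : 'rV[k]_n) : Prop :=
  forall i j : 'I_n, p 0 j * r 0 i - mu i j * (p 0 i * r 0 j) = 0.

(* intersection of the V_U(q_l) is empty; M l is the lift of q_l *)
Definition base_point_free (M : 'I_n -> 'M[k]_n) : Prop :=
  ~ exists p r : 'rV[k]_n, [/\ p != 0, r != 0, in_VU p r &
        forall l, tensor_eval (M l) p r = 0].

Definition mu_symmetric (A : 'M[k]_n) : Prop :=
  forall i j, A i j = mu i j * A j i.

(* The quadratic relation space W of A in V (x) V (V = S_1^*, x_i dual to  *)
(* z_i; w = sum w_ij x_i (x) x_j).  It consists of the combinations        *)
(* sum alpha_ij (x_i x_j + mu_ij x_j x_i) whose right hand side            *)
(* sum_k (sum alpha_ij (M_k)_ij) y_k in the defining relations of A        *)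
(* vanishes, i.e. the relations of A involving only the x_i.               *)

Definition in_W (M : 'I_n -> 'M[k]_n) (w : 'M[k]_n) : Prop :=
  exists alpha : 'M[k]_n,
    (forall l, \sum_(i < n) \sum_(j < n) alpha i j * M l i j = 0) /\
    w = \matrix_(i, j) (alpha i j + mu j i * alpha j i).

Definition pairing (w : 'M[k]_n) (a b : 'rV[k]_n) : k :=
  \sum_(i < n) \sum_(j < n) w i j * a 0 i * b 0 j.

Definition in_Gamma (M : 'I_n -> 'M[k]_n) (a b : 'rV[k]_n) : Prop :=
  [/\ a != 0, b != 0 & forall w, in_W M w -> pairing w a b = 0].

Definition in_P_span (q : 'I_n -> {mpoly k[n]}) (f : {mpoly k[n]}) : Prop :=
  f != 0 /\ in_span q f.

End SkewClifford.

(* Main.v *)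
Require Import Defs.
From HB Require Import structures.
From mathcomp Require Import all_boot all_order all_algebra.
From mathcomp Require Import mpoly.
From mathcomp Require Import ring.
Import GRing.Theory.
Local Open Scope ring_scope.

Set Implicit Arguments.
Unset Strict Implicit.
Section Helpers.
Variables (k : fieldType) (n : nat) (mu : 'M[k]_n).

Lemma sum_delta (G : 'I_n -> k) j : \sum_(j' < n) G j' * (j' == j)%:R = G j.
Proof.
rewrite (bigD1 j) //= eqxx mulr1 big1 ?addr0 // => j' /negbTE ->.
by rewrite mulr0.
Qed.

Lemma tw_U (i j : 'I_n) :
  skew_twist mu U_(i)%MM U_(j)%MM = if (j < i)%N then mu j i else 1.
Proof.
rewrite /skew_twist (bigD1 i) //= [X in _ * X]big1 ?mulr1; last first.
  move=> i' ne; have ne' : (i == i') = false by rewrite eq_sym (negbTE ne).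
  by apply: big1 => j' _; rewrite !mnm1E ne' mul0n expr0.
case: ifP => ji.
  rewrite (bigD1 j) //= [X in _ * X]big1 ?mulr1; last first.
    move=> j' /andP[_ ne]; have ne' : (j == j') = false by rewrite eq_sym (negbTE ne).
    by rewrite !mnm1E ne' muln0 expr0.
  by rewrite !mnm1E !eqxx expr1.
apply: big1 => j' lt; rewrite !mnm1E.
have -> : (j == j') = false.
  by apply/negbTE; apply: contraFN ji => /eqP ->.
by rewrite muln0 expr0.
Qed.

Lemma tw_neq0 (Hmu0 : forall i j, mu i j != 0) (i j : 'I_n) :
  skew_twist mu U_(i)%MM U_(j)%MM != 0.
Proof. by rewrite tw_U; case: ifP => _; rewrite ?oner_eq0. Qed.

Lemma smul_zgen (i j : 'I_n) :
  smul mu (zgen k i) (zgen k j) =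
  skew_twist mu U_(i)%MM U_(j)%MM *: 'X_[(U_(i) + U_(j))%MM].
Proof.
by rewrite /smul /zgen !msuppX !big_seq1 !mcoeffX !eqxx !mul1r.
Qed.

Lemma U_eq (i j i' j' : 'I_n) :
  ((U_(i') + U_(j'))%MM == (U_(i) + U_(j))%MM :> 'X_{1..n}) =
  ((i' == i) && (j' == j)) || ((i' == j) && (j' == i)).
Proof.
apply/idP/idP; last first.
  case/orP=> /andP[/eqP -> /eqP ->] //; by rewrite addmC.
move=> /eqP E.
have h t : ((i' == t) + (j' == t) = (i == t) + (j == t))%N.
  by have := congr1 (fun m : 'X_{1..n} => m t) E; rewrite !mnmDE !mnm1E.
have h1 := h i'; rewrite eqxx in h1.
have [ei|ni] := eqVneq i i'.
  subst i'; have h2 := h j'; rewrite eqxx in h2.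
  have : j == j' by move: h2; case: (i == j'); case: (j == j').
  by move=> /eqP ->; rewrite !eqxx.
have ej : j == i' by move: h1; rewrite (negbTE ni); case: (j == i'); case: (j' == i').
move/eqP: ej => ej; subst i'; have h2 := h j'; rewrite eqxx in h2.
have : i == j' by move: h2; case: (i == j'); case: (j == j').
by move=> /eqP ->; rewrite !eqxx orbT.
Qed.


Lemma U_inj (i j : 'I_n) : (U_(i)%MM == U_(j)%MM :> 'X_{1..n}) = (i == j).
Proof.
apply/eqP/eqP => [E|-> //].
have := congr1 (fun m : 'X_{1..n} => m i) E; rewrite !mnm1E eqxx.
by case: eqP.
Qed.

Lemma bool_split (A B C D : bool) : ~~ (A && C) -> ~~ (B && D) ->
  ((A && B) || (C && D))%:R = (A%:R * B%:R + C%:R * D%:R : k).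
Proof.
by case: A; case: B; case: C; case: D => //= _ _; rewrite ?mulr0 ?mul0r ?mulr1 ?addr0 ?add0r.
Qed.

Lemma sum2_delta (F : 'I_n -> 'I_n -> k) x y :
  \sum_(i' < n) \sum_(j' < n) F i' j' * ((i' == x)%:R * (j' == y)%:R) = F x y.
Proof.
transitivity (\sum_(i' < n) (\sum_(j' < n) F i' j' * (j' == y)%:R) * (i' == x)%:R).
  apply: eq_bigr => i' _; rewrite mulr_suml; apply: eq_bigr => j' _.
  by rewrite mulrCA mulrA [_ * (i' == x)%:R]mulrC mulrA.
transitivity (\sum_(i' < n) F i' y * (i' == x)%:R).
  by apply: eq_bigr => i' _; rewrite sum_delta.
by rewrite (sum_delta (fun i' => F i' y)).
Qed.

Lemma mcoeff_sumI (F : 'I_n -> {mpoly k[n]}) m :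
  (\sum_(i < n) F i)@_m = \sum_(i < n) (F i)@_m.
Proof. by apply: (big_morph (mcoeff m)); [exact: mcoeffD | exact: mcoeff0]. Qed.

Lemma quadric_coef (P : 'M[k]_n) (i j : 'I_n) :
  (quadric mu P)@_(U_(i) + U_(j))%MM =
  P i j * skew_twist mu U_(i)%MM U_(j)%MM
  + (i != j)%:R * (P j i * skew_twist mu U_(j)%MM U_(i)%MM).
Proof.
rewrite /quadric mcoeff_sumI.
under eq_bigr => i' _ do rewrite mcoeff_sumI.
under eq_bigr => i' _ do under eq_bigr => j' _ do
    rewrite mcoeffZ smul_zgen mcoeffZ mcoeffX U_eq.
have [eij|nij] := eqVneq i j.
  subst j; rewrite /= mul0r addr0.
  rewrite -(sum2_delta (fun i' j' => P i' j' * skew_twist mu U_(i')%MM U_(j')%MM)).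
  apply: eq_bigr => i' _; apply: eq_bigr => j' _.
  by rewrite orbb -mulnb natrM mulrA.
have nAC i' : ~~ ((i' == i) && (i' == j)).
  by apply/andP => -[/eqP -> /eqP e]; rewrite e eqxx in nij.
have nBD j' : ~~ ((j' == j) && (j' == i)).
  by apply/andP => -[/eqP -> /eqP e]; rewrite e eqxx in nij.
under eq_bigr => i' _ do under eq_bigr => j' _ do
  rewrite bool_split // mulrDr mulrDr.
rewrite /= mul1r.
under eq_bigr => i' _ do rewrite big_split /=.
rewrite big_split /=.
congr (_ + _).
  rewrite -(sum2_delta (fun i' j' => P i' j' * skew_twist mu U_(i')%MM U_(j')%MM)).
  by apply: eq_bigr => i' _; apply: eq_bigr => j' _; rewrite mulrA.
rewrite -(sum2_delta (fun i' j' => P i' j' * skew_twist mu U_(i')%MM U_(j')%MM)).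
by apply: eq_bigr => i' _; apply: eq_bigr => j' _; rewrite mulrA.
Qed.


Lemma sum_supp (V : zmodType) (F : 'X_{1..n} -> V) (p : {mpoly k[n]}) s :
  uniq s -> {subset msupp p <= s} -> (forall m, p@_m = 0 -> F m = 0) ->
  \sum_(m <- msupp p) F m = \sum_(m <- s) F m.
Proof.
move=> us sub F0.
rewrite [RHS](bigID (fun m => m \in msupp p)) /=.
rewrite [X in _ + X]big1 ?addr0; last by move=> m /memN_msupp_eq0 /F0.
rewrite -[X in _ = X]big_filter; apply: perm_big.
apply: uniq_perm; first exact: msupp_uniq.
  exact: filter_uniq.
by move=> m; rewrite mem_filter; case: (boolP (m \in msupp p)) => // /sub ->.
Qed.

Definition us : seq 'X_{1..n} := [seq U_(i)%MM | i <- index_enum 'I_n].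

Lemma us_uniq : uniq us.
Proof.
rewrite map_inj_uniq ?index_enum_uniq // => i j /eqP.
by rewrite U_inj => /eqP.
Qed.

Lemma lin1_coef (a : 'rV[k]_n) m :
  (lin1 a)@_m = \sum_(i < n) a 0 i * (U_(i)%MM == m)%:R.
Proof.
rewrite /lin1 mcoeff_sumI; apply: eq_bigr => i _.
by rewrite mcoeffZ /zgen mcoeffX.
Qed.

Lemma lin1_coefU (a : 'rV[k]_n) i : (lin1 a)@_(U_(i)%MM) = a 0 i.
Proof.
rewrite lin1_coef -(sum_delta (fun j => a 0 j)); apply: eq_bigr => j _.
by rewrite U_inj.
Qed.

Lemma lin1_supp (a : 'rV[k]_n) : {subset msupp (lin1 a) <= us}.
Proof.
move=> m; apply: contraLR => nm.
rewrite mcoeff_msupp negbK lin1_coef big1 // => i _.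
have -> : (U_(i)%MM == m) = false.
  apply/negbTE; apply: contra nm => /eqP <-.
  by apply: map_f; exact: mem_index_enum.
by rewrite mulr0.
Qed.

Definition Tm (a b : 'rV[k]_n) : 'M[k]_n := \matrix_(i, j) (a 0 i * b 0 j).

Lemma smul_lin1 (a b : 'rV[k]_n) :
  smul mu (lin1 a) (lin1 b) = quadric mu (Tm a b).
Proof.
transitivity (\sum_(m1 <- us) \sum_(m2 <- us)
   ((lin1 a)@_m1 * (lin1 b)@_m2 * skew_twist mu m1 m2) *: 'X_[(m1 + m2)%MM]).
  rewrite /smul (sum_supp us_uniq (@lin1_supp a)); last first.
    by move=> m ->; apply: big1 => m2 _; rewrite !mul0r scale0r.
  apply: eq_bigr => m1 _; rewrite (sum_supp us_uniq (@lin1_supp b)) //.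
  by move=> m ->; rewrite mulr0 mul0r scale0r.
rewrite /us big_map; apply: eq_bigr => i _.
rewrite big_map; apply: eq_bigr => j _.
by rewrite smul_zgen scalerA !lin1_coefU mxE.
Qed.

Lemma quadric_lin (P : 'M[k]_n) (Q : 'I_n -> 'M[k]_n) (c : 'I_n -> k) :
  (forall i j, P i j = \sum_(l < n) c l * Q l i j) ->
  quadric mu P = \sum_(l < n) c l *: quadric mu (Q l).
Proof.
move=> HP; rewrite /quadric.
under eq_bigr => i _ do under eq_bigr => j _ do rewrite HP scaler_suml.
under eq_bigr => i _ do rewrite exchange_big /=.
rewrite exchange_big /=; apply: eq_bigr => l _.
rewrite scaler_sumr; apply: eq_bigr => i _.
rewrite scaler_sumr; apply: eq_bigr => j _.
by rewrite scalerA.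
Qed.


Lemma tw_rel (Hmu1 : forall i j, mu i j * mu j i = 1) (Hmu2 : forall i, mu i i = 1)
  (i j : 'I_n) :
  mu j i * skew_twist mu U_(j)%MM U_(i)%MM = skew_twist mu U_(i)%MM U_(j)%MM.
Proof.
rewrite !tw_U; have [lt|gt|eq] := ltngtP i j.
- by rewrite Hmu1.
- by rewrite mulr1.
- have ij : i = j by apply: val_inj.
  by rewrite ij Hmu2 mulr1.
Qed.

Lemma quadric_add (P Q : 'M[k]_n) :
  quadric mu (P + Q) = quadric mu P + quadric mu Q.
Proof.
rewrite /quadric -big_split; apply: eq_bigr => i _.
rewrite -big_split; apply: eq_bigr => j _.
by rewrite mxE scalerDl.
Qed.

Definition Tm' (a b : 'rV[k]_n) : 'M[k]_n :=
  \matrix_(i, j) (mu i j * (a 0 j * b 0 i)).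
Definition Nm (a b : 'rV[k]_n) : 'M[k]_n :=
  \matrix_(i, j) (a 0 i * b 0 j + mu i j * (a 0 j * b 0 i)).

Lemma quadric_swap (Hmu1 : forall i j, mu i j * mu j i = 1)
  (Hmu2 : forall i, mu i i = 1) (a b : 'rV[k]_n) :
  quadric mu (Tm' a b) = quadric mu (Tm a b).
Proof.
rewrite /quadric exchange_big /=; apply: eq_bigr => i _.
apply: eq_bigr => j _.
rewrite !mxE !smul_zgen !scalerA addmC -(tw_rel Hmu1 Hmu2 i j).
by congr (_ *: _); ring.
Qed.

Lemma Nm_split (a b : 'rV[k]_n) : Nm a b = Tm a b + Tm' a b.
Proof. by apply/matrixP => i j; rewrite !mxE. Qed.

Lemma T_half (Hchar : (2%:R : k) != 0) (Hmu1 : forall i j, mu i j * mu j i = 1)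
  (Hmu2 : forall i, mu i i = 1) (a b : 'rV[k]_n) :
  quadric mu (Tm a b) = 2%:R^-1 *: quadric mu (Nm a b).
Proof.
rewrite Nm_split quadric_add quadric_swap // -mulr2n -scaler_nat scalerA.
by rewrite mulVf // scale1r.
Qed.

Lemma pairing_N (alpha : 'M[k]_n) (a b : 'rV[k]_n) :
  pairing (\matrix_(i, j) (alpha i j + mu j i * alpha j i)) a b =
  \sum_(i < n) \sum_(j < n) alpha i j * Nm a b i j.
Proof.
rewrite /pairing.
transitivity (\sum_(i < n) \sum_(j < n) alpha i j * (a 0 i * b 0 j)
   + \sum_(i < n) \sum_(j < n) mu j i * alpha j i * a 0 i * b 0 j).
  rewrite -big_split; apply: eq_bigr => i _.
  rewrite -big_split; apply: eq_bigr => j _.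
  rewrite mxE; transitivity (alpha i j * (a 0 i * b 0 j) + mu j i * alpha j i * a 0 i * b 0 j);
    [ring | reflexivity].
rewrite [X in _ + X]exchange_big /= -big_split; apply: eq_bigr => i _.
rewrite -big_split; apply: eq_bigr => j _.
rewrite mxE; transitivity (alpha i j * (a 0 i * b 0 j) + mu i j * alpha i j * a 0 j * b 0 i);
  [reflexivity | ring].
Qed.

Lemma span_of_dual (M : 'I_n -> 'M[k]_n) (N : 'M[k]_n) :
  (forall alpha : 'M[k]_n,
     (forall l, \sum_(i < n) \sum_(j < n) alpha i j * M l i j = 0) ->
     \sum_(i < n) \sum_(j < n) alpha i j * N i j = 0) ->
  exists d : 'I_n -> k, forall i j, N i j = \sum_(l < n) d l * M l i j.
Proof.
move=> H.
pose B : 'M[k]_(n, n * n) := \matrix_(l < n, t < n * n) mxvec (M l) 0 t.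
have key (X : 'M[k]_n) (C : 'M[k]_(n * n)) c :
    (mxvec X *m C) 0 c = \sum_(i < n) \sum_(j < n) X i j * C (mxvec_index i j) c.
  rewrite mxE (reindex _ (curry_mxvec_bij _ _)) /= pair_bigA /=.
  by apply: eq_bigr => -[i j] _ /=; rewrite mxvecE.
have sub : (mxvec N <= B)%MS.
  rewrite submxE; apply/eqP/rowP => c; rewrite [RHS]mxE key.
  pose alpha : 'M[k]_n := \matrix_(i, j) cokermx B (mxvec_index i j) c.
  have Ha (X : 'M[k]_n) : \sum_(i < n) \sum_(j < n) alpha i j * X i j
      = (mxvec X *m cokermx B) 0 c.
    rewrite key; apply: eq_bigr => i _; apply: eq_bigr => j _.
    by rewrite mxE mulrC.
  rewrite -key -Ha; apply: H => l; rewrite Ha.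
  have -> : mxvec (M l) = row l B by apply/rowP => t; rewrite !mxE.
  by rewrite -row_mul mulmx_coker row0 mxE.
case/submxP: sub => D HD; exists (fun l => D 0 l) => i j.
have := congr1 (fun v : 'rV[k]_(n * n) => v 0 (mxvec_index i j)) HD.
rewrite /= mxvecE mxE => ->; apply: eq_bigr => l _; by rewrite mxE mxvecE.
Qed.


Lemma lt_trick (x1 x2 p m m' : k) : m' * m = 1 ->
  x1 + x2 * m = p + m' * p * m -> x1 + m * x2 = p + p.
Proof.
move=> h E; rewrite [m * x2]mulrC E.
by rewrite -mulrA [p * m]mulrC mulrA h mul1r.
Qed.

Lemma gt_trick (x1 x2 p m m' : k) : m * m' = 1 ->
  x1 * m' + x2 = p * m' + m' * p -> x1 + m * x2 = p + p.
Proof.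
move=> h E; apply/eqP; rewrite -subr_eq0.
have -> : x1 + m * x2 - (p + p) =
   m * ((x1 * m' + x2) - (p * m' + m' * p)) + (m * m' - 1) * (p + p - x1) by ring.
by rewrite E subrr h subrr mulr0 mul0r addr0.
Qed.

End Helpers.

Unset Implicit Arguments.
Set Strict Implicit.

Theorem lemma1p9 (k : closedFieldType) (n : nat) (mu : 'M[k]_n)
  (Hchar : (2%:R : k) != 0)
  (Hn : (1 <= n)%N)
  (Hmu0 : forall i j, mu i j != 0)
  (Hmu1 : forall i j, mu i j * mu j i = 1)
  (Hmu2 : forall i, mu i i = 1)
  (M : 'I_n -> 'M[k]_n)
  (Hsym : forall l, mu_symmetric mu (M l))
  (Hind : forall c : 'I_n -> k, \sum_(l < n) c l *: M l = 0 -> forall l, c l = 0)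
  (Hnormal : normalizing_system mu (fun l => quadric mu (M l)))
  (Hbpf : base_point_free mu M)
  (a b : 'rV[k]_n) (Ha : a != 0) (Hb : b != 0) :
  in_P_span (fun l => quadric mu (M l)) (smul mu (lin1 a) (lin1 b))
  <-> in_Gamma mu M a b.
Proof.
rewrite /in_P_span /in_Gamma smul_lin1.
split.
- case=> _ [c Hc]; split => // w [alpha [Halpha ->]]; rewrite pairing_N.
  pose P : 'M[k]_n := \matrix_(i, j) \sum_(l < n) c l * M l i j.
  have HP : quadric mu (Tm a b) = quadric mu P.
    by rewrite Hc (quadric_lin mu (P := P) (Q := M) (c := c)) // => i j; rewrite mxE.
  have Psym i j : P j i = mu j i * P i j.
    rewrite !mxE mulr_sumr; apply: eq_bigr => l _; rewrite (Hsym l j i).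
    by rewrite mulrCA.
  have Pdef i j : P i j = \sum_(l < n) c l * M l i j by rewrite mxE.
  clearbody P.
  have claim i j : Nm mu a b i j = P i j + P i j.
    have E := congr1 (mcoeff (U_(i) + U_(j))%MM) HP.
    rewrite !quadric_coef !tw_U (Psym i j) in E.
    rewrite mxE; move: E; rewrite !mxE.
    have [lt|gt|eq] := ltngtP i j.
    + have nij : i != j by apply: contraTneq lt => ->; rewrite ltnn.
      rewrite nij /= !mulr1 !mul1r => E.
      exact: (lt_trick (Hmu1 j i) E).
    + have nij : i != j by apply: contraTneq gt => ->; rewrite ltnn.
      rewrite nij /= !mulr1 !mul1r => E.
      exact: (gt_trick (Hmu1 i j) E).
    + have ij : i = j by apply: val_inj.
      subst j; rewrite eqxx /= !mulr1 !mul0r !addr0 Hmu2 mul1r => ->.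
      by [].
  under eq_bigr => i _ do under eq_bigr => j _ do rewrite claim Pdef -mulr2n -mulr_natl mulr_sumr mulr_sumr.
  under eq_bigr => i _ do rewrite exchange_big /=.
  rewrite exchange_big /= big1 // => l _.
  transitivity (2%:R * c l * \sum_(i < n) \sum_(j < n) alpha i j * M l i j).
    rewrite mulr_sumr; apply: eq_bigr => i _.
    rewrite mulr_sumr; apply: eq_bigr => j _.
    by ring.
  by rewrite Halpha mulr0.
- case=> _ _ HG; split.
  + apply/eqP => Q0.
    have E i j := congr1 (mcoeff (U_(i) + U_(j))%MM) Q0.
    have D t : a 0 t * b 0 t = 0.
      have := E t t; rewrite quadric_coef eqxx /= mul0r addr0 mcoeff0 tw_U ltnn.
      by rewrite mxE mulr1.
    case/matrix0Pn: Ha => i0 [i ai]; rewrite (ord1 i0) in ai.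
    case/matrix0Pn: Hb => j0 [j bj]; rewrite (ord1 j0) in bj.
    have bi : b 0 i = 0 by move: (D i) => /eqP; rewrite mulf_eq0 (negbTE ai) => /eqP.
    have aj : a 0 j = 0 by move: (D j) => /eqP; rewrite mulf_eq0 (negbTE bj) orbF => /eqP.
    have := E i j; rewrite quadric_coef mcoeff0 !mxE aj bi !(mul0r, mulr0) addr0.
    by move/eqP; rewrite !mulf_eq0 (negbTE ai) (negbTE bj) (negbTE (tw_neq0 Hmu0 i j)).
  + have [d Hd] : exists d : 'I_n -> k,
        forall i j, Nm mu a b i j = \sum_(l < n) d l * M l i j.
      apply: span_of_dual => alpha Hal.
      rewrite -pairing_N; apply: HG; exists alpha; split => //.
    exists (fun l => 2%:R^-1 * d l).
    rewrite T_half // (quadric_lin mu Hd) scaler_sumr.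
    by apply: eq_bigr => l _; rewrite scalerA.
Qed.
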